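(* Let $k\in\mathbb{N}$ and let $B$ be the $3k\times 2k$ matrix $B=\begin{bmatrix}2I_{2k}\\ -2\,I_k\otimes[1,1]\end{bmatrix}$. Let $A_1,A_2$ be $3k\times 2k$ real matrices such that (1) $A_1\ge0$ and $A_2\ge0$ entrywise; (2) for all $i\in[3k]$ and $j\in[k]$, $A_2(i,2j-1)=A_2(i,2j)$; (3) every row of $A_1+A_2/2$ has entry sum at most $1$. Then $B+A_1-A_2$ has rank $2k$.
   Context: $I_m$ is the $m\times m$ identity matrix; $I_k\otimes[1,1]$ is the $k\times 2k$ matrix whose $j$-th row has entries $1$ in columns $2j-1$ and $2j$ and $0$ elsewhere. *)

(* Defs.v *)
From mathcomp Require Import all_boot all_order all_algebra.
From mathcomp Require Import reals.
Set Implicit Arguments. Unset Strict Implicit. Unset Printing Implicit Defensive.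
Import Order.TTheory GRing.Theory Num.Theory.
Local Open Scope ring_scope.

(* B = [ 2 I_{2k} ; -2 I_k (x) [1,1] ], a 3k x 2k matrix.  Indices are 0-based:
   row i < 2k : entry 2 at column i;
   row 2k + j (j < k) : entry -2 at columns 2j and 2j+1 (0-based),
   i.e. columns 2j-1, 2j in 1-based numbering. *)
Definition Bmat (R : ringType) (k : nat) : 'M[R]_(3 * k, 2 * k) :=
  \matrix_(i < 3 * k, j < 2 * k)
    if (i < 2 * k)%N then (if (i : nat) == (j : nat) then 2 else 0)
    else (if ((j : nat)./2 == (i : nat) - 2 * k)%N then -2 else 0).

(* Main.v *)
Require Import Defs.
From mathcomp Require Import all_boot all_order all_algebra.
From mathcomp Require Import reals.
From mathcomp Require Import zify ring lra.
Import Order.TTheory GRing.Theory Num.Theory.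
Set Implicit Arguments. Unset Strict Implicit.
Local Open Scope ring_scope.

Lemma rank_full (F : fieldType) m n (M : 'M[F]_(m,n)) :
  (forall u : 'rV_n, u *m M^T = 0 -> u = 0) -> \rank M = n.
Proof.
move=> H; rewrite -mxrank_tr.
have K0 : kermx M^T = 0.
  apply/row_matrixP => i; rewrite row0; apply: H; apply/sub_kermxP; exact: row_sub.
have := mxrank_ker M^T; rewrite K0 mxrank0 => /esym/eqP; rewrite subn_eq0 => h.
by apply/eqP; rewrite eqn_leq rank_leq_row h.
Qed.

Lemma halfE n : n = (n./2 * 2 + odd n)%N.
Proof. by rewrite muln2 addnC odd_double_half. Qed.

Lemma part_lt k (j : 'I_(2 * k)) : ((if odd j then j.-1 else j.+1) < 2 * k)%N.
Proof.
have := ltn_ord j; have e := halfE j.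
case: (odd j) e => /= e; lia.
Qed.

Definition part k (j : 'I_(2 * k)) : 'I_(2 * k) := Ordinal (part_lt j).

Lemma part_half k (j : 'I_(2*k)) : ((part j)./2 = j./2)%N.
Proof.
rewrite /part /=. have e := halfE j. set q := j./2 in e *.
case Ej: (odd j); rewrite Ej in e; rewrite e.
- by rewrite addn1 /= muln2 -[RHS](half_bit_double _ false).
- by rewrite addn0 muln2 -[RHS](half_bit_double _ true) add1n.
Qed.

Lemma part_neq k (j : 'I_(2*k)) : part j != j.
Proof.
apply/eqP => /(congr1 val) /=; have := halfE j.
case: (odd j) => /= e; lia.
Qed.

Lemma partK k (j : 'I_(2*k)) : part (part j) = j.
Proof.
apply/val_inj => /=; have e := halfE j.
have oj : odd (if odd j then j.-1 else j.+1) = ~~ odd j.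
  case Ej: (odd j); rewrite Ej in e; rewrite e /=.
  - by rewrite addn1 /= oddM andbF.
  - by rewrite addn0 oddM andbF.
rewrite oj; case: (odd j) e => /= e; lia.
Qed.

Lemma part_only k (j j' : 'I_(2*k)) : (j'./2 = j./2)%N -> j' = j \/ j' = part j.
Proof.
move=> h; have e := halfE j; have e' := halfE j'.
rewrite h in e'; case Ej: (odd j) e => e; case Ej': (odd j') e' => e'.
- by left; apply/val_inj => /=; lia.
- by right; apply/val_inj => /=; rewrite Ej; lia.
- by right; apply/val_inj => /=; rewrite Ej; lia.
- by left; apply/val_inj => /=; lia.
Qed.

Theorem lemma17 (R : realType) (k : nat) (A1 A2 : 'M[R]_(3 * k, 2 * k)) :
  (forall i j, 0 <= A1 i j) ->
  (forall i j, 0 <= A2 i j) ->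
  (forall i (j j' : 'I_(2 * k)), (j ./2 = j' ./2)%N -> A2 i j = A2 i j') ->
  (forall i, \sum_(j < 2 * k) (A1 i j + A2 i j / 2) <= 1) ->
  \rank (Bmat R k + A1 - A2) = (2 * k)%N.
Proof.
move=> hA1 hA2 hA2p hsum.
apply: rank_full => u hu.
pose x (j : 'I_(2 * k)) : R := u 0 j.
have hrow i : \sum_j Bmat R k i j * x j + \sum_j (A1 i j - A2 i j) * x j = 0.
  rewrite -big_split /=.
  transitivity ((u *m (Bmat R k + A1 - A2)^T) 0 i); last by rewrite hu mxE.
  rewrite [RHS]mxE; apply: eq_bigr => j _.
  rewrite /x !mxE; ring.
pose z (j : 'I_(2 * k)) : R := x j + x (part j).
pose c := \big[Order.max/0]_(j < 2 * k) Order.max `|x j| `|z j|.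
have c0 : 0 <= c.
  rewrite /c; elim/big_ind: _ => //= [a b ha hb|a _]; rewrite le_max ?ha ?normr_ge0 //.
have hxc j : `|x j| <= c.
  apply: le_trans (le_bigmax _ _ j); rewrite le_max lexx //.
have hzc j : `|z j| <= c.
  apply: le_trans (le_bigmax _ _ j); rewrite le_max lexx orbT //.
have key i : `|\sum_j (A1 i j - A2 i j) * x j| <= c.
  have S : \sum_j A2 i j * x (part j) = \sum_j A2 i j * x j.
    rewrite (reindex_inj (can_inj (@partK k))) /=.
    apply: eq_bigr => j _; rewrite partK (hA2p i (part j) j (part_half j)) //.
  have E : \sum_j (A1 i j - A2 i j) * x j
         = \sum_j (A1 i j * x j - A2 i j / 2 * z j).
    under eq_bigr do rewrite mulrBl.
    rewrite !sumrB; congr (_ - _).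
    under [RHS]eq_bigr do rewrite mulrDr mulrAC [_ / 2 * _]mulrAC.
    rewrite big_split /= -!mulr_suml S; lra.
  rewrite E; apply: le_trans (ler_norm_sum _ _ _) _.
  apply: le_trans (_ : \sum_j (A1 i j + A2 i j / 2) * c <= c).
    apply: ler_sum => j _; apply: le_trans (ler_normB _ _) _.
    rewrite normrM (ger0_norm (hA1 i j)) normrM (@ger0_norm _ (A2 i j / 2)); last first.
      by apply: divr_ge0.
    rewrite mulrDl lerD // ler_wpM2l //; by apply: divr_ge0.
  rewrite -mulr_suml; rewrite -[X in _ <= X]mul1r ler_wpM2r //.
have h2k : (2 * k <= 3 * k)%N by rewrite leq_mul2r leqnSn orbT.
have hx j : 2 * `|x j| <= c.
  pose iw : 'I_(3 * k) := Ordinal (leq_trans (ltn_ord j) h2k).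
  have := hrow iw.
  rewrite (bigD1 j) //= big1; last first.
    move=> j' hj'; rewrite mxE /= ltn_ord.
    case: eqP => [/val_inj e|]; last by rewrite mul0r.
    by rewrite e eqxx in hj'.
  rewrite mxE /= ltn_ord eqxx addr0 => e.
  have -> : 2 * `|x j| = `|\sum_j (A1 iw j - A2 iw j) * x j|.
    have -> : \sum_j (A1 iw j - A2 iw j) * x j = - (2 * x j) by lra.
    by rewrite normrN normrM ger0_norm.
  exact: key.
have hz j : 2 * `|z j| <= c.
  have lt : (2 * k + j./2 < 3 * k)%N.
    have := ltn_ord j; have := halfE j; lia.
  pose iw : 'I_(3 * k) := Ordinal lt.
  have := hrow iw.
  rewrite (bigD1 j) //= (bigD1 (part j)) /=; last by rewrite part_neq.
  rewrite big1; last first.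
    move=> j' /andP [hj1 hj2]; rewrite mxE /= ltnNge leq_addr /=.
    case: eqP => [e|]; last by rewrite mul0r.
    rewrite addKn in e.
    by case: (part_only e) => ee; [rewrite ee eqxx in hj1 | rewrite ee eqxx in hj2].
  rewrite !mxE /= ltnNge leq_addr /= addKn eqxx part_half eqxx addr0 => e.
  have -> : 2 * `|z j| = `|\sum_j (A1 iw j - A2 iw j) * x j|.
    have -> : \sum_j (A1 iw j - A2 iw j) * x j = 2 * z j by rewrite /z; lra.
    by rewrite normrM ger0_norm.
  exact: key.
have cle : c <= c / 2.
  rewrite /c; apply: bigmax_le; first by apply: divr_ge0.
  move=> j _; rewrite ge_max; apply/andP; split.
  - by have := hx j; rewrite /c; lra.
  - by have := hz j; rewrite /c; lra.
apply/rowP => j; rewrite mxE; apply/eqP; rewrite -normr_eq0 eq_le normr_ge0 andbT.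
by apply: le_trans (hxc j) _; lra.
Qed.
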